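(* Let $\mathbf{X}^*=(X^*_{1:1},\dots,X^*_{n:n})'$, $\boldsymbol{\mu}$, $\mathbf{E}$ be as in the context and $\mathbf{1}=(1,\dots,1)'\in\mathbb{R}^n$. Then the partial maxima BLIEs of $\theta_1$ and $\theta_2$ are, respectively, \[ T_1=\frac{\mathbf{1}'\mathbf{E}^{-1}\mathbf{X}^*}{\mathbf{1}'\mathbf{E}^{-1}\mathbf{1}},\qquad T_2=\frac{\mathbf{1}'\mathbf{G}\mathbf{X}^*}{\mathbf{1}'\mathbf{E}^{-1}\mathbf{1}}, \] where $\mathbf{G}=\mathbf{E}^{-1}(\mathbf{1}\boldsymbol{\mu}'-\boldsymbol{\mu}\mathbf{1}')\mathbf{E}^{-1}$, and their mean squared errors are \[ \mathrm{MSE}[T_1]=\frac{\theta_2^2}{\mathbf{1}'\mathbf{E}^{-1}\mathbf{1}},\qquad \mathrm{MSE}[T_2]=\Big(1-\frac{D}{\mathbf{1}'\mathbf{E}^{-1}\mathbf{1}}\Big)\theta_2^2, \] where $D=(\mathbf{1}'\mathbf{E}^{-1}\mathbf{1})(\boldsymbol{\mu}'\mathbf{E}^{-1}\boldsymbol{\mu})-(\mathbf{1}'\mathbf{E}^{-1}\boldsymbol{\mu})^2>0$.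
   Context: $F$ is a known, parameter-free, non-degenerate distribution function on $\mathbb{R}$ with finite variance. For unknown $\theta_1\in\mathbb{R}$, $\theta_2>0$, $X_1^*,\dots,X_n^*$ are i.i.d. with distribution function $F((x-\theta_1)/\theta_2)$ and $X^*_{j:j}=\max\{X_1^*,\dots,X_j^*\}$. Let $X_1,\dots,X_n$ be i.i.d. from $F$, $X_{j:j}=\max\{X_1,\dots,X_j\}$, $\mathbf{X}=(X_{1:1},\dots,X_{n:n})'$, $\boldsymbol{\mu}=\mathbb{E}[\mathbf{X}]$, $\mathbf{E}=\mathbb{E}[\mathbf{X}\mathbf{X}']$ (positive definite). A linear statistic $L(\mathbf{X}^* )=\mathbf{c}'\mathbf{X}^*$ ($\mathbf{c}\in\mathbb{R}^n$ constant) is invariant for $\theta_1$ if $L(b\mathbf{X}^*+a\mathbf{1})=a+bL(\mathbf{X}^* )$ for all $a\in\mathbb{R}$, $b>0$ (equivalently $\mathbf{c}'\mathbf{1}=1$), and invariant for $\theta_2$ if $L(b\mathbf{X}^*+a\mathbf{1})=bL(\mathbf{X}^* )$ for all $a\in\mathbb{R}$, $b>0$ (equivalently $\mathbf{c}'\mathbf{1}=0$). The BLIE of $\theta_k$ is the linear statistic invariant for $\theta_k$ minimizing the mean squared error $\mathbb{E}[L-\theta_k]^2$. *)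

(* Defs.v *)
From HB Require Import structures.
From mathcomp Require Import all_boot all_order all_algebra.
From mathcomp Require Import all_classical all_reals all_analysis.
Set Implicit Arguments. Unset Strict Implicit. Unset Printing Implicit Defensive.
Import Order.TTheory GRing.Theory Num.Theory.
Local Open Scope classical_set_scope.
Local Open Scope ring_scope.

Section Defs.
Context {d : measure_display} {T : measurableType d} {R : realType}.

Definition mutually_independent (P : probability T R) (n : nat)
  (Y : 'I_n -> T -> R) : Prop :=
  forall B : 'I_n -> set R, (forall i, measurable (B i)) ->
    P (\bigcap_(i in [set: 'I_n]) (Y i @^-1` B i)) =
    (\prod_(i < n) P (Y i @^-1` B i))%E.

Definition identically_distributed (P : probability T R) (n : nat)
  (Y : 'I_n -> T -> R) : Prop :=
  forall (i j : 'I_n) (B : set R), measurable B ->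
    P (Y i @^-1` B) = P (Y j @^-1` B).

(* partial maximum X_{j:j} = max{Y_0, ..., Y_j} (0-based indices) *)
Definition partial_max (n : nat) (Y : 'I_n -> T -> R) (j : 'I_n) : T -> R :=
  fun w => \big[Num.max/Y j w]_(i < n | (i <= j)%N) Y i w.

Definition expect (P : probability T R) (f : T -> R) : R :=
  fine (\int[P]_w (f w)%:E).

Definition pmax_mean (P : probability T R) (n : nat) (Y : 'I_n -> T -> R)
  : 'cV[R]_n := \col_j expect P (partial_max Y j).

Definition pmax_moment (P : probability T R) (n : nat) (Y : 'I_n -> T -> R)
  : 'M[R]_n :=
  \matrix_(i, j) expect P (fun w => partial_max Y i w * partial_max Y j w).

End Defs.

Definition ones {R : nzRingType} (n : nat) : 'cV[R]_n := const_mx 1.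

Definition linstat {R : nzRingType} (n : nat) (c : 'rV[R]_n) (x : 'I_n -> R) : R :=
  \sum_(j < n) c 0 j * x j.

Definition invariant_loc {R : realType} (n : nat) (c : 'rV[R]_n) : Prop :=
  forall (a b : R) (x : 'I_n -> R), 0 < b ->
    linstat c (fun j => b * x j + a) = a + b * linstat c x.

Definition invariant_scale {R : realType} (n : nat) (c : 'rV[R]_n) : Prop :=
  forall (a b : R) (x : 'I_n -> R), 0 < b ->
    linstat c (fun j => b * x j + a) = b * linstat c x.

Definition pos_def {R : realType} (n : nat) (A : 'M[R]_n) : Prop :=
  forall v : 'cV[R]_n, v != 0 -> 0 < (v^T *m A *m v) 0 0.

(* the location-scale sample X*_i = theta1 + theta2 * Y_i, which has
   distribution function F((x - theta1)/theta2) when Y_i ~ F *)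
Definition ls_sample {d : measure_display} {T : measurableType d} {R : realType}
  (n : nat) (Y : 'I_n -> T -> R) (th1 th2 : R) : 'I_n -> T -> R :=
  fun i w => th1 + th2 * Y i w.

Definition MSE {d : measure_display} {T : measurableType d} {R : realType}
  (P : probability T R) (n : nat) (Y : 'I_n -> T -> R)
  (c : 'rV[R]_n) (th1 th2 target : R) : R :=
  expect P (fun w =>
    (linstat c (fun j => partial_max (ls_sample Y th1 th2) j w) - target) ^+ 2).

Definition is_BLIE_loc {d : measure_display} {T : measurableType d} {R : realType}
  (P : probability T R) (n : nat) (Y : 'I_n -> T -> R) (c : 'rV[R]_n) : Prop :=
  invariant_loc c /\
  forall (th1 th2 : R), 0 < th2 -> forall c' : 'rV[R]_n, invariant_loc c' ->
    MSE P Y c th1 th2 th1 <= MSE P Y c' th1 th2 th1.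

Definition is_BLIE_scale {d : measure_display} {T : measurableType d} {R : realType}
  (P : probability T R) (n : nat) (Y : 'I_n -> T -> R) (c : 'rV[R]_n) : Prop :=
  invariant_scale c /\
  forall (th1 th2 : R), 0 < th2 -> forall c' : 'rV[R]_n, invariant_scale c' ->
    MSE P Y c th1 th2 th2 <= MSE P Y c' th1 th2 th2.

(* Main.v *)
Require Import Defs.
From HB Require Import structures.
From mathcomp Require Import all_boot all_order all_algebra.
From mathcomp Require Import all_classical all_reals all_analysis.
From mathcomp Require Import ring lra.
Import Order.TTheory GRing.Theory Num.Theory.
Local Open Scope classical_set_scope.
Local Open Scope ring_scope.

Lemma m11T {R : nzRingType} (M : 'M[R]_1) : M 0 0 = M^T 0 0.
Proof. by rewrite mxE. Qed.

Lemma m11D {R : nzRingType} (M N : 'M[R]_1) : (M + N) 0 0 = M 0 0 + N 0 0.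
Proof. by rewrite mxE. Qed.
Lemma m11B {R : nzRingType} (M N : 'M[R]_1) : (M - N) 0 0 = M 0 0 - N 0 0.
Proof. by rewrite !mxE. Qed.
Lemma m11Z {R : nzRingType} a (M : 'M[R]_1) : (a *: M) 0 0 = a * M 0 0.
Proof. by rewrite mxE. Qed.

Lemma mul11l {R : comNzRingType} k (M : 'M[R]_1) (A : 'M[R]_(1,k)) : M *m A = M 0 0 *: A.
Proof. by rewrite {1}[M]mx11_scalar mul_scalar_mx. Qed.

Lemma mul11r {R : comNzRingType} k (M : 'M[R]_1) (A : 'M[R]_(k,1)) : A *m M = M 0 0 *: A.
Proof. by rewrite {1}[M]mx11_scalar mul_mx_scalar. Qed.

Section Alg.
Context {R : realType} (n : nat) (E : 'M[R]_n) (mu : 'cV[R]_n).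
Hypothesis EsymT : E^T = E.
Hypothesis Epd : pos_def E.

Definition Qf (c : 'rV[R]_n) := (c *m E *m c^T) 0 0.
Definition Bf (a b : 'rV[R]_n) := (a *m E *m b^T) 0 0.
Definition onef (c : 'rV[R]_n) := (c *m ones n) 0 0.
Definition mf (c : 'rV[R]_n) := (c *m mu) 0 0.

Lemma Qf_gt0 c : c != 0 -> 0 < Qf c.
Proof.
move=> c0; have := Epd (c^T); rewrite trmxK; apply.
by apply: contra c0 => /eqP/(congr1 trmx); rewrite trmxK trmx0 => ->.
Qed.

Lemma Bf_sym a b : Bf a b = Bf b a.
Proof. by rewrite /Bf m11T !trmx_mul trmxK EsymT mulmxA. Qed.

Lemma QfD a b : Qf (a + b) = Qf a + 2 * Bf a b + Qf b.
Proof.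
rewrite /Qf linearD /= !mulmxDl !mulmxDr !m11D -/(Bf a b) -/(Bf b a) Bf_sym.
rewrite /Bf; ring.
Qed.

Lemma BfBl a b c : Bf (a - b) c = Bf a c - Bf b c.
Proof. by rewrite /Bf !mulmxBl m11B. Qed.
Lemma onefB a b : onef (a - b) = onef a - onef b.
Proof. by rewrite /onef !mulmxBl m11B. Qed.
Lemma mfB a b : mf (a - b) = mf a - mf b.
Proof. by rewrite /mf !mulmxBl m11B. Qed.

Lemma Qf_ge0 c : 0 <= Qf c.
Proof.
have [->|c0] := eqVneq c 0; last exact/ltW/Qf_gt0.
by rewrite /Qf !mul0mx mxE.
Qed.

Lemma E_unit : E \in unitmx.
Proof.
rewrite -row_free_unit -kermx_eq0; apply/eqP/matrixP => i j; rewrite [RHS]mxE.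
apply/eqP/negPn/negP => Kij.
have u0 : row i (kermx E) != 0.
  by apply: contra Kij => /eqP/matrixP/(_ 0 j); rewrite mxE [RHS]mxE => ->.
by have := @Qf_gt0 _ u0; rewrite /Qf -row_mul mulmx_ker row0 !mul0mx mxE ltxx.
Qed.

Let Ei := invmx E.
Lemma EiT : Ei^T = Ei.
Proof. by rewrite /Ei trmx_inv EsymT. Qed.
Lemma EEi : E *m Ei = 1%:M.
Proof. exact: mulmxV E_unit. Qed.
Lemma EiE : Ei *m E = 1%:M.
Proof. exact: mulVmx E_unit. Qed.


Lemma mfD a b : mf (a + b) = mf a + mf b.
Proof. by rewrite /mf !mulmxDl m11D. Qed.
Lemma onefD a b : onef (a + b) = onef a + onef b.
Proof. by rewrite /onef !mulmxDl m11D. Qed.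

Hypothesis n0 : (0 < n)%N.

Lemma ones_neq0 : ones n != 0 :> 'cV[R]_n.
Proof.
apply/negP => /eqP/matrixP/(_ (Ordinal n0) 0); rewrite !mxE => /eqP.
by rewrite oner_eq0.
Qed.

Definition sv := ((ones n)^T *m invmx E *m ones n) 0 0.
Definition tv := ((ones n)^T *m invmx E *m mu) 0 0.
Definition uv := (mu^T *m invmx E *m mu) 0 0.

Lemma sv_gt0 : 0 < sv.
Proof.
have a0 : (ones n)^T *m Ei != 0.
  apply: contra ones_neq0 => /eqP h.
  have : (ones n)^T *m Ei *m E = 0 by rewrite h mul0mx.
  rewrite -mulmxA EiE mulmx1 => /(congr1 trmx); rewrite trmxK trmx0 => ->.
  by [].
have := @Qf_gt0 _ a0; congr (0 < _).
by rewrite /Qf /sv trmx_mul EiT trmxK -!mulmxA (mulmxA Ei E) EiE mul1mx.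
Qed.

Lemma sv_neq0 : sv != 0.
Proof. by rewrite gt_eqF // sv_gt0. Qed.

Definition cloc := sv^-1 *: ((ones n)^T *m invmx E).

Lemma onef_c1 : onef cloc = 1.
Proof. by rewrite /onef -scalemxAl m11Z -/sv mulVf // sv_neq0. Qed.

Lemma Bf_c1 a : Bf a cloc = sv^-1 * onef a.
Proof.
rewrite /Bf /cloc linearZ /= -scalemxAr m11Z trmx_mul trmxK -/Ei EiT.
by rewrite mulmxA -(mulmxA a E Ei) EEi mulmx1.
Qed.

Lemma Qf_c1 : Qf cloc = sv^-1.
Proof. by rewrite /Qf -/(Bf cloc cloc) Bf_c1 onef_c1 mulr1. Qed.

Lemma loc_decomp c : onef c = 1 -> Qf c = sv^-1 + Qf (c - cloc).
Proof.
move=> hc.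
have : forall v, onef v = 0 -> Qf (cloc + v) = sv^-1 + Qf v.
  by move=> v hv; rewrite QfD Bf_sym Bf_c1 hv Qf_c1 !mulr0 addr0.
move=> H; have hv : onef (c - cloc) = 0 by rewrite onefB hc onef_c1 subrr.
by have := H _ hv; rewrite (addrC cloc) subrK.
Qed.

Definition cscale := sv^-1 *: ((ones n)^T *m
   (invmx E *m (ones n *m mu^T - mu *m (ones n)^T) *m invmx E)).

Lemma c2E : cscale = mu^T *m Ei - (tv / sv) *: ((ones n)^T *m Ei).
Proof.
rewrite /cscale !mulmxA mulmxBr mulmxBl !mulmxA -/Ei.
rewrite (@mul11l _ _ ((ones n)^T *m Ei *m ones n)) (@mul11l _ _ ((ones n)^T *m Ei *m mu)).
rewrite -!scalemxAl -/sv -/tv scalerBr !scalerA mulVf ?sv_neq0 // scale1r.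
by rewrite mulrC.
Qed.

Lemma c2T : cscale^T = Ei *m mu - (tv / sv) *: (Ei *m ones n).
Proof. rewrite c2E linearB linearZ /= !trmx_mul EiT. apply/matrixP => i j; rewrite !mxE; by congr (_ - _ * _); apply: eq_bigr => k _; rewrite !mxE. Qed.

Lemma Bf_c2 a : Bf a cscale = mf a - tv / sv * onef a.
Proof.
rewrite /Bf c2T mulmxBr -scalemxAr !mulmxA -(mulmxA a E Ei) EEi mulmx1.
by rewrite m11B m11Z.
Qed.

Lemma tvT : (mu^T *m Ei *m ones n) 0 0 = tv.
Proof. by rewrite m11T !trmx_mul (trmxK mu) EiT mulmxA. Qed.

Lemma onef_c2 : onef cscale = 0.
Proof.
rewrite /onef c2E mulmxBl -scalemxAl m11B m11Z tvT -/sv.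
by rewrite divfK ?sv_neq0 // subrr.
Qed.

Lemma mf_c2 : mf cscale = uv - tv ^+ 2 / sv.
Proof.
rewrite /mf c2E mulmxBl -scalemxAl m11B m11Z -/uv -/tv.
by rewrite mulrAC -expr2.
Qed.

Lemma Qf_c2 : Qf cscale = mf cscale.
Proof. by rewrite /Qf -/(Bf cscale cscale) Bf_c2 onef_c2 mulr0 subr0. Qed.

Lemma scale_decomp c : onef c = 0 ->
  Qf c - 2 * mf c = (Qf cscale - 2 * mf cscale) + Qf (c - cscale).
Proof.
move=> hc.
have : forall v, onef v = 0 ->
  Qf (cscale + v) - 2 * mf (cscale + v) = (Qf cscale - 2 * mf cscale) + Qf v.
  move=> v hv; rewrite QfD mfD Bf_sym Bf_c2 hv mulr0 subr0; ring.
move=> H; have hv : onef (c - cscale) = 0 by rewrite onefB hc onef_c2 subrr.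
by have := H _ hv; rewrite (addrC cscale) subrK.
Qed.

Definition Dv := sv * uv - tv ^+ 2.

Lemma Dv_gt0 (i0 i1 : 'I_n) : mu i0 0 != mu i1 0 -> 0 < Dv.
Proof.
move=> hmu.
set w := sv *: mu - tv *: ones n.
have w0 : w != 0.
  apply: contra hmu => /eqP /matrixP h.
  have := h i0 0; have := h i1 0; rewrite !mxE => h1 h0.
  have : sv * (mu i0 0 - mu i1 0) = 0 by rewrite mulrBr; lra.
  by move/eqP; rewrite mulf_eq0 (negPf sv_neq0) subr_eq0.
have z0 : Ei *m w != 0.
  apply: contra w0 => /eqP h; apply/eqP.
  by rewrite -[w]mul1mx -EEi -mulmxA h mulmx0.
have := Epd (Ei *m w) z0; rewrite trmx_mul EiT -!mulmxA (mulmxA Ei E) EiE mul1mx.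
have -> : (w^T *m (Ei *m w)) 0 0 = sv * Dv.
  have wT : w^T = sv *: mu^T - tv *: (ones n)^T by apply/matrixP => i j; rewrite !mxE.
  rewrite wT /w !mulmxBr !mulmxBl.
  rewrite -!scalemxAr -!scalemxAl !m11B !m11Z !mulmxA -/sv -/tv -/uv.
  rewrite -/Ei tvT /Dv; ring.
by rewrite pmulr_rgt0 // sv_gt0.
Qed.

End Alg.

Lemma sqn {R : realDomainType} (x : R) : `|x| ^+ 2 = x ^+ 2.
Proof. by rewrite -normrX ger0_norm // sqr_ge0. Qed.

Section Prob.
Context d (T : measurableType d) (R : realType) (P : probability T R) (n : nat)
  (Y : 'I_n -> T -> R).
Hypothesis mY : forall i, measurable_fun setT (Y i).
Hypothesis iY2 : forall i, P.-integrable setT (fun w => (Y i w ^+ 2)%:E).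

Local Notation X := (partial_max Y).

Lemma pm_mem (j : 'I_n) w : exists k, X j w = Y k w.
Proof.
rewrite /partial_max; apply: (big_ind (fun v => exists k, v = Y k w)).
- by exists j.
- by move=> a b [k ->] [l ->]; rewrite maxEle; case: ifP => _; [exists l|exists k].
- by move=> i _; exists i.
Qed.

Lemma big_max_ge (s : seq 'I_n) (p : pred 'I_n) (x : R) (F : 'I_n -> R) i :
  i \in s -> p i -> F i <= \big[Num.max/x]_(k <- s | p k) F k.
Proof.
elim: s => // a s IH; rewrite in_cons big_cons => /orP [/eqP <- | ins] pi.
  by rewrite pi le_max lexx.
by case: ifP => _; [rewrite le_max IH ?orbT | exact: IH].
Qed.

Lemma pm_ge (j i : 'I_n) w : (i <= j)%N -> Y i w <= X j w.
Proof. by move=> ij; rewrite /partial_max; apply: big_max_ge => //; rewrite mem_index_enum. Qed.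

Lemma meas_bigmax (s : seq 'I_n) (p : pred 'I_n) (g : T -> R) (F : 'I_n -> T -> R) :
  measurable_fun setT g -> (forall i, measurable_fun setT (F i)) ->
  measurable_fun setT (fun w => \big[Num.max/g w]_(i <- s | p i) F i w).
Proof.
move=> mg mF; elim: s => [|a s IH].
  by under eq_fun do rewrite big_nil.
have -> : (fun w => \big[Num.max/g w]_(i <- a :: s | p i) F i w) =
  if p a then (F a \max (fun w => \big[Num.max/g w]_(i <- s | p i) F i w))
  else (fun w => \big[Num.max/g w]_(i <- s | p i) F i w).
  by apply: funext => w; rewrite big_cons; case: (p a).
by case: (p a) => //; exact: measurable_realfun.measurable_maxr.
Qed.

Lemma pm_meas (j : 'I_n) : measurable_fun setT (X j).
Proof. exact: meas_bigmax. Qed.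

Lemma pm_affine th1 th2 (j : 'I_n) w : 0 < th2 ->
  partial_max (ls_sample Y th1 th2) j w = th1 + th2 * X j w.
Proof.
move=> th2p.
have hm : {morph (fun v => th1 + th2 * v) : x y / Num.max x y >-> Num.max x y}.
  move=> x y /=; rewrite !maxEle lerD2l ler_pM2l //.
  by case: ifP.
by rewrite /partial_max (big_morph (fun v => th1 + th2 * v) hm (erefl _)).
Qed.

Lemma pm_first (i0 : 'I_n) w : nat_of_ord i0 = 0%N -> X i0 w = Y i0 w.
Proof.
move=> h0; rewrite /partial_max; apply: (big_ind (fun v => v = Y i0 w)) => //.
- by move=> a b -> ->; rewrite maxxx.
- move=> i; rewrite h0 leqn0 => /eqP hi.
  by have -> : i = i0 by apply: val_inj; rewrite /= hi h0.
Qed.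


Definition intg (f : T -> R) := P.-integrable setT (EFin \o f).

Lemma intD (f g : T -> R) : intg f -> intg g -> intg (fun w => f w + g w).
Proof. by move=> hf hg; exact: (integrableD measurableT hf hg). Qed.

Lemma intZ (k : R) (f : T -> R) : intg f -> intg (fun w => k * f w).
Proof. by move=> hf; exact: (integrableZl measurableT k hf). Qed.

Lemma intcst (k : R) : intg (fun _ => k).
Proof. exact: (finite_measure_integrable_cst P k measurableT). Qed.

Lemma int_sum (I : Type) (s : seq I) (f : I -> T -> R) :
  (forall i, intg (f i)) -> intg (fun w => \sum_(i <- s) f i w).
Proof.
move=> hf; elim: s => [|a s IH].
  by under eq_fun do rewrite big_nil; exact: intcst.
under eq_fun do rewrite big_cons; exact: intD.
Qed.

Lemma int_le (f g : T -> R) : measurable_fun setT f -> (forall w, `|f w| <= g w) -> intg g -> intg f.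
Proof.
move=> mf hfg hg; apply: (le_integrable measurableT _ _ hg).
  exact/measurable_realfun.measurable_EFinP.
move=> w _ /=; rewrite lee_fin (le_trans (hfg w)) //; exact: ler_norm.
Qed.

Definition Ssq (w : T) := \sum_k Y k w ^+ 2.

Lemma intS : intg Ssq.
Proof. by apply: int_sum => i; exact: iY2. Qed.

Lemma Ssq_ge0 w : 0 <= Ssq w.
Proof. by apply: sumr_ge0 => i _; exact: sqr_ge0. Qed.

Lemma pm_sq_le (j : 'I_n) w : X j w ^+ 2 <= Ssq w.
Proof.
have [k ->] := pm_mem j w.
rewrite /Ssq (bigD1 k) //= lerDl; apply: sumr_ge0 => i _; exact: sqr_ge0.
Qed.

Lemma intXX (i j : 'I_n) : intg (fun w => X i w * X j w).
Proof.
apply: (@int_le _ (fun w => Ssq w + Ssq w)); last exact: intD intS intS.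
  by apply: measurable_realfun.measurable_funM; exact: pm_meas.
move=> w; have hi := pm_sq_le i w; have hj := pm_sq_le j w.
rewrite normrM; have a0 := normr_ge0 (X i w); have b0 := normr_ge0 (X j w).
rewrite -sqn in hi; rewrite -sqn in hj.
nra.
Qed.

Lemma intX (i : 'I_n) : intg (X i).
Proof.
apply: (@int_le _ (fun w => 1 + Ssq w)); last exact: intD (intcst 1) intS.
  exact: pm_meas.
move=> w; have hi := pm_sq_le i w; have a0 := normr_ge0 (X i w).
rewrite -sqn in hi; nra.
Qed.

Lemma expectD (f g : T -> R) : intg f -> intg g ->
  expect P (fun w => f w + g w) = expect P f + expect P g.
Proof. by move=> hf hg; exact: (RintegralD measurableT hf hg). Qed.

Lemma expectZ (k : R) (f : T -> R) : intg f -> expect P (fun w => k * f w) = k * expect P f.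
Proof. by move=> hf; exact: (RintegralZl k measurableT hf). Qed.

Lemma expect_cst (k : R) : expect P (fun _ => k) = k.
Proof.
have := Rintegral_cst P (@measurableT _ T) k.
move=> h; rewrite (_ : fine (P setT) = 1) ?mulr1 in h => //.
by rewrite probability_setT.
Qed.

Lemma expect_sum (I : Type) (s : seq I) (f : I -> T -> R) :
  (forall i, intg (f i)) ->
  expect P (fun w => \sum_(i <- s) f i w) = \sum_(i <- s) expect P (f i).
Proof.
move=> hf; elim: s => [|a s IH].
  by under eq_fun do rewrite big_nil; rewrite big_nil expect_cst.
under eq_fun do rewrite big_cons.
by rewrite expectD ?IH ?big_cons //; exact: int_sum.
Qed.


Lemma expect_quad (c : 'rV[R]_n) (a b : R) :
  expect P (fun w => (a + b * \sum_j c 0 j * X j w) ^+ 2) =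
  a ^+ 2 + 2 * a * b * (c *m pmax_mean P Y) 0 0
  + b ^+ 2 * (c *m pmax_moment P Y *m c^T) 0 0.
Proof.
have e : (fun w => (a + b * \sum_j c 0 j * X j w) ^+ 2) =
  (fun w => a ^+ 2 + (\sum_i (2 * a * b * c 0 i) * X i w +
     \sum_i \sum_j (b ^+ 2 * c 0 i * c 0 j) * (X i w * X j w))).
  apply: funext => w.
  have h1 : \sum_i (2 * a * b * c 0 i) * X i w = 2 * a * b * \sum_j c 0 j * X j w.
    by rewrite mulr_sumr; apply: eq_bigr => i _; ring.
  have h2 : \sum_i \sum_j (b ^+ 2 * c 0 i * c 0 j) * (X i w * X j w) =
      b ^+ 2 * (\sum_j c 0 j * X j w) ^+ 2.
    rewrite [(\sum_j _) ^+ 2]expr2 mulr_suml mulr_sumr; apply: eq_bigr => i _.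
    rewrite mulr_sumr mulr_sumr; apply: eq_bigr => j _; ring.
  rewrite h1 h2; ring.
rewrite e expectD; last 2 first.
- exact: intcst.
- apply: intD; apply: int_sum => i; [exact: intZ (intX i)|].
  by apply: int_sum => j; exact: intZ (intXX i j).
rewrite expect_cst expectD; last 2 first.
- by apply: int_sum => i; exact: intZ (intX i).
- by apply: int_sum => i; apply: int_sum => j; exact: intZ (intXX i j).
rewrite expect_sum; last by move=> i; exact: intZ (intX i).
rewrite expect_sum; last first.
  by move=> i; apply: int_sum => j; exact: intZ (intXX i j).
have h1 : \sum_i expect P (fun w => (2 * a * b * c 0 i) * X i w) =
    2 * a * b * (c *m pmax_mean P Y) 0 0.
  rewrite mxE mulr_sumr; apply: eq_bigr => i _; rewrite expectZ ?intX // mxE; ring.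
have h2 : \sum_i expect P (fun w =>
      \sum_j (b ^+ 2 * c 0 i * c 0 j) * (X i w * X j w)) =
    b ^+ 2 * (c *m pmax_moment P Y *m c^T) 0 0.
  rewrite (eq_bigr (fun i => \sum_j (b ^+ 2 * c 0 i * c 0 j) * pmax_moment P Y i j)); last first.
    move=> i _; rewrite (@expect_sum _ _ (fun j w => (b ^+ 2 * c 0 i * c 0 j) * (X i w * X j w))); last first.
      by move=> j; exact: intZ (intXX i j).
    by apply: eq_bigr => j _; rewrite expectZ ?intXX // mxE.
  rewrite exchange_big /= mxE mulr_sumr; apply: eq_bigr => j _.
  rewrite !mxE mulr_suml mulr_sumr; apply: eq_bigr => i _; rewrite !mxE; ring.
rewrite h1 h2; ring.
Qed.

Lemma MSE_eq (c : 'rV[R]_n) th1 th2 tg : 0 < th2 ->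
  MSE P Y c th1 th2 tg =
  expect P (fun w => ((th1 * \sum_j c 0 j - tg) + th2 * \sum_j c 0 j * X j w) ^+ 2).
Proof.
move=> th2p; rewrite /MSE; congr (expect P _); apply: funext => w; rewrite /linstat.
under eq_bigr do rewrite pm_affine //.
congr (_ ^+ 2).
rewrite (eq_bigr (fun j => th1 * c 0 j + th2 * (c 0 j * X j w))) => [|j _]; last by ring.
rewrite big_split /= -!mulr_sumr; ring.
Qed.

Lemma mu_neq (i0 i1 : 'I_n) : nat_of_ord i0 = 0%N -> nat_of_ord i1 = 1%N ->
  pos_def (pmax_moment P Y) -> pmax_mean P Y i0 0 != pmax_mean P Y i1 0.
Proof.
move=> h0 h1 pd; apply/negP => /eqP hmu.
have ne10 : i1 != i0 by apply/negP => /eqP e; move: h1; rewrite e h0.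
pose Z := fun w => X i1 w + (-1) * X i0 w.
have Z0 w : 0 <= Z w.
  rewrite /Z mulN1r subr_ge0 pm_first // pm_ge // h0 h1 //.
have iZ : intg Z by apply: intD; [exact: intX | apply: intZ; exact: intX].
have mZ : measurable_fun setT Z.
  apply: measurable_realfun.measurable_funD; first exact: pm_meas.
  apply: measurable_realfun.measurable_funM; first exact: measurable_cst.
  exact: pm_meas.
have EZ : expect P Z = 0.
  rewrite expectD ?expectZ ?intX //; last by apply: intZ; exact: intX.
  by move: hmu; rewrite !mxE => ->; ring.
have EZ' : (\int[P]_w (Z w)%:E = 0)%E.
  have fin := integrable_fin_num measurableT iZ.
  by rewrite -(fineK fin); move: EZ; rewrite /expect => ->.
have A : (\int[P]_w `|(Z w)%:E| = 0)%E.
  rewrite -EZ'; apply: eq_integral => w _ /=; by rewrite ger0_norm.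
have mZE := proj2 (measurable_realfun.measurable_EFinP setT Z) mZ.
have ae := (ae_eq_integral_abs P measurableT mZE).1 A.
have ae2 : ae_eq P setT (EFin \o (fun w => Z w ^+ 2)) (cst 0%E).
  apply: filterS ae => w hw Dw; have := hw Dw; rewrite /= => -[->].
  by rewrite expr0n.
have I2 : expect P (fun w => Z w ^+ 2) = 0.
  rewrite /expect (ae_eq_integral (cst 0%E)) //.
  - by rewrite integral0.
  - apply/measurable_realfun.measurable_EFinP.
    by apply: measurable_realfun.measurable_funM.
pose c : 'rV[R]_n := \row_j ((j == i1)%:R - (j == i0)%:R).
have c1 : c 0 i1 = 1 by rewrite mxE eqxx (negbTE ne10) subr0.
have c0 : c 0 i0 = -1 by rewrite mxE eqxx eq_sym (negbTE ne10) sub0r.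
have cj j : j != i1 -> j != i0 -> c 0 j = 0.
  by move=> a b; rewrite mxE (negbTE a) (negbTE b) subrr.
have hsum w : \sum_j c 0 j * X j w = Z w.
  rewrite (bigD1 i1) //= (bigD1 i0) /=; last by rewrite eq_sym ne10.
  rewrite big1 ?addr0; last by move=> j /andP [a b]; rewrite cj // mul0r.
  by rewrite c1 c0 mul1r.
have := expect_quad c 0 1.
have -> : (fun w => (0 + 1 * \sum_j c 0 j * X j w) ^+ 2) = (fun w => Z w ^+ 2).
  by apply: funext => w; rewrite hsum add0r mul1r.
rewrite I2 expr0n /= !mulr0 !mul0r !add0r expr1n mul1r => Q0.
have cT0 : c^T != 0.
  apply/negP => /eqP /matrixP /(_ i1 0); rewrite !mxE eqxx (negbTE ne10) subr0.
  by move/eqP; rewrite oner_eq0.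
by have := pd _ cT0; rewrite (trmxK c) -Q0 ltxx.
Qed.

Lemma MSE_loc (c : 'rV[R]_n) th1 th2 : 0 < th2 -> \sum_j c 0 j = 1 ->
  MSE P Y c th1 th2 th1 = th2 ^+ 2 * Qf n (pmax_moment P Y) c.
Proof. by move=> th2p hs; rewrite MSE_eq // hs mulr1 subrr expect_quad /Qf; ring. Qed.

Lemma MSE_scale (c : 'rV[R]_n) th1 th2 : 0 < th2 -> \sum_j c 0 j = 0 ->
  MSE P Y c th1 th2 th2 =
  th2 ^+ 2 * (1 + (Qf n (pmax_moment P Y) c - 2 * mf n (pmax_mean P Y) c)).
Proof. by move=> th2p hs; rewrite MSE_eq // hs mulr0 sub0r expect_quad /Qf /mf; ring. Qed.

End Prob.

Lemma sum_onef {R : realType} n (c : 'rV[R]_n) : \sum_j c 0 j = onef n c.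
Proof. by rewrite /onef mxE; apply: eq_bigr => j _; rewrite mxE mulr1. Qed.

Lemma inv_loc_iff {R : realType} n (c : 'rV[R]_n) :
  invariant_loc c <-> \sum_j c 0 j = 1.
Proof.
split.
  move=> h; have := h 1 1 (fun _ => 0) ltr01; rewrite /linstat.
  have e1 : \sum_j c 0 j * (1 * 0 + 1) = \sum_j c 0 j.
    by apply: eq_bigr => j _; rewrite mulr0 add0r mulr1.
  have e2 : \sum_j c 0 j * 0 = 0 by rewrite big1 // => j _; rewrite mulr0.
  by rewrite e1 e2 mulr0 addr0.
move=> hs a b x _; rewrite /linstat.
rewrite (eq_bigr (fun j => b * (c 0 j * x j) + a * c 0 j)) => [|j _]; last by ring.
by rewrite big_split /= -!mulr_sumr hs mulr1 addrC.
Qed.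

Lemma inv_scale_iff {R : realType} n (c : 'rV[R]_n) :
  invariant_scale c <-> \sum_j c 0 j = 0.
Proof.
split.
  move=> h; have := h 1 1 (fun _ => 0) ltr01; rewrite /linstat.
  have e1 : \sum_j c 0 j * (1 * 0 + 1) = \sum_j c 0 j.
    by apply: eq_bigr => j _; rewrite mulr0 add0r mulr1.
  have e2 : \sum_j c 0 j * 0 = 0 by rewrite big1 // => j _; rewrite mulr0.
  by rewrite e1 e2 mulr0.
move=> hs a b x _; rewrite /linstat.
rewrite (eq_bigr (fun j => b * (c 0 j * x j) + a * c 0 j)) => [|j _]; last by ring.
by rewrite big_split /= -!mulr_sumr hs mulr0 addr0.
Qed.

Theorem proposition2p2 (d : measure_display) (T : measurableType d)
  (R : realType) (P : probability T R) (n : nat) (Y : 'I_n -> T -> R) :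
  (2 <= n)%N ->
  (forall i, measurable_fun setT (Y i)) ->
  mutually_independent P Y ->
  identically_distributed P Y ->
  (forall i, P.-integrable setT (fun w => (Y i w ^+ 2)%:E)) ->
  (forall i (x : R), P (Y i @^-1` [set x]) != 1%E) ->
  pos_def (pmax_moment P Y) ->
  let mu := pmax_mean P Y in
  let E := pmax_moment P Y in
  let Ei := invmx E in
  let s := ((ones n)^T *m Ei *m ones n) 0 0 in
  let G := Ei *m (ones n *m mu^T - mu *m (ones n)^T) *m Ei in
  let D := s * (mu^T *m Ei *m mu) 0 0 - ((ones n)^T *m Ei *m mu) 0 0 ^+ 2 in
  let c1 := s^-1 *: ((ones n)^T *m Ei) in
  let c2 := s^-1 *: ((ones n)^T *m G) in
    is_BLIE_loc P Y c1 /\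
      (forall c, is_BLIE_loc P Y c -> c = c1) /\
      is_BLIE_scale P Y c2 /\
      (forall c, is_BLIE_scale P Y c -> c = c2) /\
      (forall th1 th2 : R, 0 < th2 -> MSE P Y c1 th1 th2 th1 = th2 ^+ 2 / s) /\
      (forall th1 th2 : R, 0 < th2 ->
         MSE P Y c2 th1 th2 th2 = (1 - D / s) * th2 ^+ 2) /\
    0 < D.
Proof.
move=> n2 mY _ _ iY2 _ pd mu E Ei s G D c1 c2.
have n0 : (0 < n)%N by apply: leq_trans n2.
have ET : (pmax_moment P Y)^T = pmax_moment P Y.
  apply/matrixP => i j; rewrite !mxE; congr (expect P _).
  by apply: funext => w; rewrite mulrC.
have hc1 : c1 = cloc n (pmax_moment P Y) by [].
have hc2 : c2 = cscale n (pmax_moment P Y) (pmax_mean P Y) by [].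
have hs : s = sv n (pmax_moment P Y) by [].
have hD : D = Dv n (pmax_moment P Y) (pmax_mean P Y) by [].
rewrite hc1 hc2 hs hD.
have Sc1 : \sum_j cloc n (pmax_moment P Y) 0 j = 1 by rewrite sum_onef onef_c1.
have Sc2 : \sum_j cscale n (pmax_moment P Y) (pmax_mean P Y) 0 j = 0 by rewrite sum_onef onef_c2.
split; [|split; [|split; [|split; [|split; [|split]]]]].
- split; first exact/inv_loc_iff.
  move=> th1 th2 th2p c' /inv_loc_iff hc'.
  rewrite !MSE_loc // Qf_c1 // (loc_decomp _ _ ET pd n0) -?sum_onef //.
  apply: ler_wpM2l; [exact: sqr_ge0 | idtac].
  by rewrite -{1}[(sv n _)^-1]addr0 lerD2l (Qf_ge0 _ _ pd).
- move=> c [/inv_loc_iff hc H].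
  have := H 0 1 ltr01 (cloc n (pmax_moment P Y)) (proj2 (inv_loc_iff _ _) Sc1).
  rewrite !MSE_loc // !expr1n !mul1r Qf_c1 // (loc_decomp _ _ ET pd n0 c) -?sum_onef //.
  rewrite gerDl => hQ; apply/eqP; rewrite -subr_eq0; apply/negPn/negP => ne.
  by have := Qf_gt0 _ _ pd _ ne; rewrite ltNge hQ.
- split; first exact/inv_scale_iff.
  move=> th1 th2 th2p c' /inv_scale_iff hc'.
  rewrite !MSE_scale // (scale_decomp _ _ _ ET pd n0 c') -?sum_onef //.
  by apply: ler_wpM2l; [exact: sqr_ge0 | rewrite lerD2l -[leLHS]addr0 lerD2l (Qf_ge0 _ _ pd)].
- move=> c [/inv_scale_iff hc H].
  have := H 0 1 ltr01 (cscale n (pmax_moment P Y) (pmax_mean P Y)) (proj2 (inv_scale_iff _ _) Sc2).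
  rewrite !MSE_scale // !expr1n !mul1r (scale_decomp _ _ _ ET pd n0 c) -?sum_onef //.
  rewrite lerD2l gerDl => hQ; apply/eqP; rewrite -subr_eq0; apply/negPn/negP => ne.
  by have := Qf_gt0 _ _ pd _ ne; rewrite ltNge hQ.
- by move=> th1 th2 th2p; rewrite MSE_loc // Qf_c1.
- move=> th1 th2 th2p; rewrite MSE_scale // Qf_c2 // mf_c2 // /Dv.
  have := sv_neq0 _ _ ET pd n0; move: (sv n (pmax_moment P Y)) => sv0 hsv.
  by field.
- have i0 : (0 < n)%N by [].
  apply: (Dv_gt0 _ _ _ ET pd n0 (Ordinal n0) (Ordinal n2)).
  by apply: mu_neq.
Qed.
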